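(* Let $\alpha=0.8$, let $x\sim\mathcal N(0,1)$ and let $b\in\{0,1\}$ be independent of $x$ with $\mathbb P(b=1)=\alpha$. For $w>0$ let $\tau_w>0$ be the unique number with $\mathbb P(|b-xw|<\tau_w)=1-\alpha$, let $A_w=\{|b-xw|<\tau_w\}$, and define the population TORRENT update $$F(w)=\frac{\mathbb E[b\,x\,\mathbb I(A_w)]}{\mathbb E[x^2\,\mathbb I(A_w)]}.$$ Then there exists $w>1/2$ with $F(w)=w$; i.e., TORRENT in the infinite-sample limit, for the model $y=xw^*+b$ with $w^*=0$, has a fixed point at distance greater than $1/2$ from $w^*$.
   Context: TORRENT is the alternating procedure that, given the current $w$, keeps the $(1-\alpha)$ fraction of points with the smallest absolute residuals $|y_i-x_iw|$ and refits least squares on them; $F$ is its $n\to\infty$ limit for one-dimensional data $y_i=x_iw^*+b_i$ with $w^*=0$, $x_i$ i.i.d. $\mathcal N(0,1)$ and an $\alpha$ fraction of $b_i$ equal to $1$ (the rest $0$), independent of the $x_i$. $\mathbb I$ is the indicator. *)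

(* Defs.v *)
From Stdlib Require Import Reals Lra ClassicalEpsilon.
Open Scope R_scope.

(* Definite Riemann integral of f over [a,b] (value independent of the
   integrability proof, by RiemannInt_P5); 0 if f is not integrable
   (never happens below: all integrands are continuous). *)
Definition Rint (f : R -> R) (a b : R) : R :=
  match excluded_middle_informative (inhabited (Riemann_integrable f a b)) with
  | left H => RiemannInt (epsilon H (fun _ => True))
  | right _ => 0
  end.

Definition phi (x : R) : R := exp (- (x ^ 2) / 2) / sqrt (2 * PI).

Definition alpha : R := 8 / 10.

(* For w > 0 and b in {0,1}: |b - x w| < tau  <->  (b - tau)/w < x < (b + tau)/w.
   E_A g w tau := E[ g(b,x) * I(|b - x w| < tau) ] where x ~ N(0,1) and
   b ~ Bernoulli(alpha), independent. *)
Definition EA (g : R -> R -> R) (w tau : R) : R :=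
  (1 - alpha) * Rint (fun x => g 0 x * phi x) ((0 - tau) / w) ((0 + tau) / w)
  + alpha * Rint (fun x => g 1 x * phi x) ((1 - tau) / w) ((1 + tau) / w).

Definition probA (w tau : R) : R := EA (fun _ _ => 1) w tau.

Definition Fupd (w tau : R) : R :=
  EA (fun b x => b * x) w tau / EA (fun _ x => x ^ 2) w tau.

(* Main.v *)
Require Import Defs.
From Stdlib Require Import Reals Lra Lia ClassicalEpsilon Ranalysis5.
From Coquelicot Require Import Coquelicot.
Open Scope R_scope.

Definition gauss (x : R) : R := exp (- (x ^ 2) / 2).

Lemma gauss_derive x : is_derive gauss x (- x * gauss x).
Proof. unfold gauss. auto_derive; auto.
  replace (- (x * (x * 1)) * / 2) with (- x ^ 2 / 2) by (simpl; field).
  change (RinvImpl.Rinv 2) with (/2). field. Qed.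

Lemma gauss_cont x : continuous gauss x.
Proof. apply (@ex_derive_continuous R_AbsRing R_NormedModule). eexists. apply gauss_derive. Qed.

Definition I (x : R) : R := RInt gauss 0 x.

Lemma I_derive x : is_derive I x (gauss x).
Proof.
  apply is_derive_RInt with (a := 0).
  - exists (mkposreal _ Rlt_0_1); intros y _. unfold I. apply (@RInt_correct R_CompleteNormedModule).
    apply (@ex_RInt_continuous R_CompleteNormedModule). intros; apply gauss_cont.
  - apply gauss_cont.
Qed.

Lemma I_cont x : continuous I x.
Proof. apply (@ex_derive_continuous R_AbsRing R_NormedModule). eexists. apply I_derive. Qed.

Lemma Rint_eq (f F : R -> R) a b :
  (forall x, is_derive F x (f x)) -> (forall x, continuous f x) ->
  Rint f a b = F b - F a.
Proof.
  intros HD HC. unfold Rint.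
  destruct excluded_middle_informative as [H|H].
  - rewrite <- RInt_Reals. apply is_RInt_unique.
    apply (is_RInt_derive F f a b); intros; auto.
  - exfalso; apply H. constructor. apply ex_RInt_Reals_0.
    apply (@ex_RInt_continuous R_CompleteNormedModule). intros; auto.
Qed.

Lemma cont_pt_of_derive f f' x : (forall y, is_derive f y (f' y)) -> continuity_pt f x.
Proof.
  intros H. apply continuity_pt_filterlim.
  apply (@ex_derive_continuous R_AbsRing R_NormedModule). eexists. apply H.
Qed.

Lemma mono_le f f' a b : a <= b -> (forall x, is_derive f x (f' x)) ->
  (forall x, a <= x <= b -> 0 <= f' x) -> f a <= f b.
Proof.
  intros Hab HD Hp.
  destruct (MVT_gen f a b f') as [c [Hc E]].
  - intros; apply HD.
  - intros; eapply cont_pt_of_derive; apply HD.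
  - rewrite Rmin_left, Rmax_right in Hc by lra.
    assert (0 <= f' c) by (apply Hp; lra).
    assert (0 <= f' c * (b - a)) by (apply Rmult_le_pos; lra). lra.
Qed.

Lemma mono_lt f f' a b : a < b -> (forall x, is_derive f x (f' x)) ->
  (forall x, a <= x <= b -> 0 < f' x) -> f a < f b.
Proof.
  intros Hab HD Hp.
  destruct (MVT_gen f a b f') as [c [Hc E]].
  - intros; apply HD.
  - intros; eapply cont_pt_of_derive; apply HD.
  - rewrite Rmin_left, Rmax_right in Hc by lra.
    assert (0 < f' c) by (apply Hp; lra).
    assert (0 < f' c * (b - a)) by (apply Rmult_lt_0_compat; lra). lra.
Qed.

Lemma const_of_derive0 h a b : (forall x, is_derive h x 0) -> h a = h b.
Proof.
  intros HD.
  assert (forall a b, a <= b -> h a = h b).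
  { intros a0 b0 Hab.
    assert (h a0 <= h b0) by (apply (mono_le h (fun _ => 0)); auto; intros; lra).
    assert (- h a0 <= - h b0).
    { apply (mono_le (fun x => - h x) (fun _ => 0)); auto; try (intros; lra).
      intros x. replace 0 with (- 0) by ring. apply (is_derive_opp h). apply HD. }
    lra. }
  destruct (Rle_dec a b); [apply H; lra| symmetry; apply H; lra].
Qed.

Lemma gauss_pos x : 0 < gauss x.
Proof. apply exp_pos. Qed.

Lemma I0 : I 0 = 0.
Proof. unfold I. apply (@RInt_point R_CompleteNormedModule). Qed.

Lemma I_lt x y : x < y -> I x < I y.
Proof. intros H. apply (mono_lt I gauss); auto using I_derive, gauss_pos. Qed.

Lemma I_le x y : x <= y -> I x <= I y.
Proof. intros H. apply (mono_le I gauss); auto using I_derive. intros; left; apply gauss_pos. Qed.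

Lemma I_odd x : I (- x) = - I x.
Proof.
  assert (E : I (- x) + I x = I (- 0) + I 0).
  { apply (const_of_derive0 (fun x => I (-x) + I x)). intros y.
    replace 0 with (- 1 * gauss (- y) + gauss y).
    - apply (is_derive_plus (fun x => I (-x)) I).
      + apply (is_derive_comp I (fun x => -x)). apply I_derive.
        auto_derive; auto; ring.
      + apply I_derive.
    - unfold gauss. replace ((- y)^2) with (y^2) by ring. ring. }
  rewrite Ropp_0, I0 in E. lra.
Qed.

Definition J (x : R) : R := I x - x * gauss x.

Lemma J_derive x : is_derive J x (x ^ 2 * gauss x).
Proof.
  unfold J. replace (x ^ 2 * gauss x) with (gauss x - (1 * gauss x + x * (- x * gauss x))) by ring.
  apply (is_derive_minus I (fun x => x * gauss x)). apply I_derive.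
  apply (is_derive_mult (fun x => x) gauss). auto_derive; auto. apply gauss_derive.
  intros; apply Rmult_comm.
Qed.

Lemma J_le x y : x <= y -> J x <= J y.
Proof.
  intros H. apply (mono_le J (fun x => x^2 * gauss x)); auto using J_derive.
  intros z _. apply Rmult_le_pos. apply pow2_ge_0. left; apply gauss_pos.
Qed.

Lemma J_odd x : J (- x) = - J x.
Proof. unfold J, gauss. rewrite I_odd. replace ((- x)^2) with (x^2) by ring. ring. Qed.

Lemma J0 : J 0 = 0.
Proof. unfold J. rewrite I0. ring. Qed.

Lemma J_pos x : 0 < x -> 0 < J x.
Proof.
  intros H. assert (J (x/2) < J x).
  { apply (mono_lt J (fun x => x^2 * gauss x)); auto using J_derive; try lra.
    intros z Hz. apply Rmult_lt_0_compat. apply pow_lt; lra. apply gauss_pos. }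
  assert (J 0 <= J (x/2)) by (apply J_le; lra). rewrite J0 in H1. lra.
Qed.

Lemma gauss_dec x y : 0 <= x <= y -> gauss y <= gauss x.
Proof.
  intros H. unfold gauss. destruct (Req_dec x y). subst; lra.
  left. apply exp_increasing.
  assert (x^2 < y^2) by nra. lra.
Qed.

Fixpoint dk (k : nat) : R :=
  match k with 0%nat => 1 | S k' => dk k' * (-1) / INR (S k') end.

Definition SE (y : R) (n : nat) : R := sum_f_R0 (fun k => y ^ k * dk k) n.
Definition LI (x : R) (n : nat) : R :=
  sum_f_R0 (fun k => x ^ (2 * k + 1) * dk k / (2 ^ k * INR (2 * k + 1))) n.

Lemma SE_derive n y : is_derive (fun y => SE y (S n)) y (- SE y n).
Proof.
  induction n.
  - unfold SE; simpl. auto_derive; auto. field.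
  - unfold SE. change (is_derive (fun y => SE y (S n) + y ^ (S (S n)) * dk (S (S n))) y
      (- (SE y n + y ^ (S n) * dk (S n)))).
    replace (- (SE y n + y ^ (S n) * dk (S n))) with
      (- SE y n + (INR (S (S n)) * y ^ (S n) * dk (S (S n)))).
    + apply (is_derive_plus (fun y => SE y (S n)) (fun y => y ^ (S (S n)) * dk (S (S n)))).
      apply IHn. auto_derive; auto. simpl pred.
      change (match n with 0%nat => 1 | S _ => INR n + 1 end) with (INR (S n)).
      rewrite (S_INR (S n)). change (dk (S (S n))) with (dk (S n) * (-1) / INR (S (S n))).
      change (dk (S n)) with (dk n * (-1) / INR (S n)). rewrite (S_INR (S n)).
      assert (0 < INR (S n)) by (apply lt_0_INR; lia). change (y ^ S n) with (y * y ^ n). field. lra.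
    + change (dk (S (S n))) with (dk (S n) * (-1) / INR (S (S n))). field.
      apply not_0_INR. lia.
Qed.

Lemma SE_0 n : SE 0 n = 1.
Proof.
  induction n. unfold SE; simpl; ring. unfold SE in *. simpl. rewrite IHn. ring.
Qed.

Lemma exp_derive_neg y : is_derive (fun y => exp (- y)) y (- exp (- y)).
Proof. auto_derive; auto. ring. Qed.



Lemma below_of_derive f g f' g' :
  (forall x, is_derive f x (f' x)) -> (forall x, is_derive g x (g' x)) ->
  f 0 = g 0 -> (forall x, 0 <= x -> f' x <= g' x) -> forall y, 0 <= y -> f y <= g y.
Proof.
  intros Hf Hg E H y Hy.
  assert (g 0 - f 0 <= g y - f y).
  { apply (mono_le (fun x => g x - f x) (fun x => g' x - f' x)); auto.
    intros; apply (is_derive_minus g f); auto.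
    intros x Hx. specialize (H x (proj1 Hx)). lra. }
  lra.
Qed.

Lemma SE_derive0 y : is_derive (fun y => SE y 0) y 0.
Proof. unfold SE; simpl. auto_derive; auto. Qed.

Lemma SE_bounds m : forall y, 0 <= y -> exp (- y) <= SE y (2 * m) /\ SE y (2 * m + 1) <= exp (- y).
Proof.
  assert (Bstep : forall m, (forall y, 0 <= y -> exp (- y) <= SE y (2 * m)) ->
     forall y, 0 <= y -> SE y (2 * m + 1) <= exp (- y)).
  { clear m. intros m A. replace (2 * m + 1)%nat with (S (2 * m)) by lia.
    apply (below_of_derive _ _ (fun y => - SE y (2 * m)) (fun y => - exp (- y))).
    - intros; apply SE_derive.
    - apply exp_derive_neg.
    - rewrite SE_0, Ropp_0, exp_0; reflexivity.
    - intros x Hx. specialize (A x Hx). lra. }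
  induction m.
  - assert (A : forall y, 0 <= y -> exp (- y) <= SE y (2 * 0)).
    { simpl (2 * 0)%nat.
      apply (below_of_derive _ _ (fun y => - exp (- y)) (fun _ => 0)).
      - apply exp_derive_neg.
      - apply SE_derive0.
      - rewrite SE_0, Ropp_0, exp_0; reflexivity.
      - intros x Hx. assert (0 < exp (- x)) by apply exp_pos. lra. }
    intros y Hy; split; auto.
  - assert (A : forall y, 0 <= y -> exp (- y) <= SE y (2 * S m)).
    { replace (2 * S m)%nat with (S (2 * m + 1)) by lia.
      apply (below_of_derive _ _ (fun y => - exp (- y)) (fun y => - SE y (2 * m + 1))).
      - apply exp_derive_neg.
      - intros; apply SE_derive.
      - rewrite SE_0, Ropp_0, exp_0; reflexivity.
      - intros x Hx. destruct (IHm x Hx). lra. }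
    intros y Hy; split; auto.
Qed.

Lemma LI_term_derive k x :
  is_derive (fun x => x ^ (2 * k + 1) * dk k / (2 ^ k * INR (2 * k + 1))) x ((x ^ 2 / 2) ^ k * dk k).
Proof.
  auto_derive; auto.
  replace (k + (k + 0) + 1)%nat with (2 * k + 1)%nat by lia.
  replace (Init.Nat.pred (2 * k + 1)) with (2 * k)%nat by lia.
  rewrite pow_mult. unfold Rdiv. rewrite Rpow_mult_distr, pow_inv.
  assert (INR (2 * k + 1) <> 0) by (apply not_0_INR; lia).
  assert (2 ^ k <> 0) by (apply pow_nonzero; lra).
  field; auto.
Qed.

Lemma LI_derive n x : is_derive (fun x => LI x n) x (SE (x ^ 2 / 2) n).
Proof.
  induction n.
  - apply (is_derive_ext (fun x => x ^ (2 * 0 + 1) * dk 0 / (2 ^ 0 * INR (2 * 0 + 1)))).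
    intros; reflexivity. exact (LI_term_derive 0 x).
  - change (is_derive (fun x => LI x n + x ^ (2 * S n + 1) * dk (S n) / (2 ^ S n * INR (2 * S n + 1))) x
       (SE (x ^ 2 / 2) n + (x ^ 2 / 2) ^ S n * dk (S n))).
    apply (is_derive_plus (fun x => LI x n) (fun x => x ^ (2 * S n + 1) * dk (S n) / (2 ^ S n * INR (2 * S n + 1)))).
    apply IHn. apply LI_term_derive.
Qed.

Lemma LI_0 n : LI 0 n = 0.
Proof.
  induction n.
  - unfold LI; simpl; field.
  - change (LI 0 (S n)) with (LI 0 n + 0 ^ (2 * S n + 1) * dk (S n) / (2 ^ S n * INR (2 * S n + 1))).
    rewrite IHn, pow_i by lia. unfold Rdiv; ring.
Qed.

Lemma gauss_SE x : gauss x = exp (- (x ^ 2 / 2)).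
Proof. unfold gauss. f_equal. field. Qed.

Lemma LI_bounds m x : 0 <= x -> LI x (2 * m + 1) <= I x <= LI x (2 * m).
Proof.
  intros Hx. split.
  - apply (below_of_derive (fun x => LI x (2 * m + 1)) I (fun x => SE (x ^ 2 / 2) (2 * m + 1)) gauss); auto.
    + intros; apply LI_derive.
    + apply I_derive.
    + rewrite LI_0, I0; reflexivity.
    + intros y Hy. rewrite gauss_SE. apply SE_bounds. assert (0 <= y ^ 2) by apply pow2_ge_0. lra.
  - apply (below_of_derive I (fun x => LI x (2 * m)) gauss (fun x => SE (x ^ 2 / 2) (2 * m))); auto.
    + apply I_derive.
    + intros; apply LI_derive.
    + rewrite LI_0, I0; reflexivity.
    + intros y Hy. rewrite gauss_SE. apply SE_bounds. assert (0 <= y ^ 2) by apply pow2_ge_0. lra.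
Qed.

Definition c := sqrt (2 * PI).
Lemma c_pos : 0 < c.
Proof. unfold c. apply sqrt_lt_R0. generalize PI_RGT_0; lra. Qed.

Lemma phi_gauss x : phi x = gauss x / c.
Proof. reflexivity. Qed.

Lemma cont_of_ex_derive (f : R -> R) (x : R) : ex_derive f x -> @continuous R_UniformSpace R_UniformSpace f x.
Proof. apply (@ex_derive_continuous R_AbsRing R_NormedModule). Qed.

Lemma is_derive_ext_R (f g : R -> R) (x l : R) : is_derive f x l -> (forall t : R, f t = g t) -> is_derive g x l.
Proof. intros H E. apply (is_derive_ext f g x l E H). Qed.

Lemma Rint1 a b : Rint (fun x => 1 * phi x) a b = (I b - I a) / c.
Proof.
  rewrite (Rint_eq _ (fun x => I x / c)).
  - field. apply Rgt_not_eq, c_pos.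
  - intros x. rewrite phi_gauss. replace (1 * (gauss x / c)) with (/ c * gauss x) by (unfold Rdiv; ring).
    apply (is_derive_ext_R (fun x => / c * I x)); [| intros t; unfold Rdiv; ring].
    apply (is_derive_scal I). apply I_derive.
  - intros x. apply cont_of_ex_derive. unfold phi. auto_derive. auto.
Qed.

Lemma Rint0x a b : Rint (fun x => 0 * x * phi x) a b = 0.
Proof.
  rewrite (Rint_eq _ (fun x => 0)). ring.
  - intros x. replace (0 * x * phi x) with 0 by ring.
    apply (@is_derive_const R_AbsRing R_NormedModule 0).
  - intros x. apply cont_of_ex_derive. unfold phi. auto_derive. auto.
Qed.

Lemma Rint1x a b : Rint (fun x => 1 * x * phi x) a b = (gauss a - gauss b) / c.
Proof.
  rewrite (Rint_eq _ (fun x => - gauss x / c)).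
  - field. apply Rgt_not_eq, c_pos.
  - intros x. rewrite phi_gauss. replace (1 * x * (gauss x / c)) with (- / c * (- x * gauss x)) by (unfold Rdiv; ring).
    apply (is_derive_ext_R (fun x => - / c * gauss x)); [| intros t; unfold Rdiv; ring].
    apply (is_derive_scal gauss). apply gauss_derive.
  - intros x. apply cont_of_ex_derive. unfold phi. auto_derive. auto.
Qed.

Lemma Rintx2 a b : Rint (fun x => x ^ 2 * phi x) a b = (J b - J a) / c.
Proof.
  rewrite (Rint_eq _ (fun x => J x / c)).
  - field. apply Rgt_not_eq, c_pos.
  - intros x. rewrite phi_gauss. replace (x ^ 2 * (gauss x / c)) with (/ c * (x ^ 2 * gauss x)) by (unfold Rdiv; ring).
    apply (is_derive_ext_R (fun x => / c * J x)); [| intros t; unfold Rdiv; ring].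
    apply (is_derive_scal J). apply J_derive.
  - intros x. apply cont_of_ex_derive. unfold phi. auto_derive. auto.
Qed.

Definition Pf w t := (1 - alpha) * (I ((0 + t) / w) - I ((0 - t) / w))
  + alpha * (I ((1 + t) / w) - I ((1 - t) / w)).
Definition Nf w t := alpha * (gauss ((1 - t) / w) - gauss ((1 + t) / w)).
Definition Df w t := (1 - alpha) * (J ((0 + t) / w) - J ((0 - t) / w))
  + alpha * (J ((1 + t) / w) - J ((1 - t) / w)).

Lemma probA_eq w t : probA w t = Pf w t / c.
Proof.
  unfold probA, EA, Pf. cbv beta. rewrite !Rint1. field. apply Rgt_not_eq, c_pos.
Qed.

Lemma Fupd_eq w t : Df w t <> 0 -> Fupd w t = Nf w t / Df w t.
Proof.
  intros H. unfold Fupd, EA, Nf. cbv beta. rewrite Rint0x, Rint1x, !Rintx2.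
  unfold Df in *. field. split; auto. apply Rgt_not_eq, c_pos.
Qed.

Definition K := (1 - alpha) * c.

Lemma div_lt a b w : 0 < w -> a < b -> a / w < b / w.
Proof. intros. unfold Rdiv. apply Rmult_lt_compat_r. apply Rinv_0_lt_compat; auto. auto. Qed.

Lemma div_le a b w : 0 < w -> a <= b -> a / w <= b / w.
Proof. intros. unfold Rdiv. apply Rmult_le_compat_r. left; apply Rinv_0_lt_compat; auto. auto. Qed.

Lemma Pf_lt w t t' : 0 < w -> t < t' -> Pf w t < Pf w t'.
Proof.
  intros Hw H. unfold Pf.
  assert (I ((0 + t) / w) < I ((0 + t') / w)) by (apply I_lt, div_lt; lra).
  assert (I ((0 - t') / w) < I ((0 - t) / w)) by (apply I_lt, div_lt; lra).
  assert (I ((1 + t) / w) < I ((1 + t') / w)) by (apply I_lt, div_lt; lra).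
  assert (I ((1 - t') / w) < I ((1 - t) / w)) by (apply I_lt, div_lt; lra).
  unfold alpha. lra.
Qed.

Lemma Pf_inj w t t' : 0 < w -> Pf w t = Pf w t' -> t = t'.
Proof.
  intros Hw E. destruct (Rtotal_order t t') as [H|[H|H]]; auto.
  - apply (Pf_lt w) in H; auto; lra.
  - apply (Pf_lt w) in H; auto; lra.
Qed.

Lemma Pf_0 w : Pf w 0 = 0.
Proof. unfold Pf. replace (0 + 0) with (0 - 0) by ring. replace (1 + 0) with (1 - 0) by ring. ring. Qed.

Lemma cont_R_ext (f g : R -> R) x : (forall y, f y = g y) -> continuous f x -> continuous g x.
Proof. intros E H. apply (continuous_ext f g x E H). Qed.

Lemma Pf_ex_derive_t w t : ex_derive (fun t => Pf w t) t.
Proof.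
  unfold Pf. auto_derive. repeat split; eexists; apply I_derive.
Qed.

Lemma Pf_ex_derive_w w t : w <> 0 -> ex_derive (fun w => Pf w t) w.
Proof.
  intros Hw. unfold Pf. auto_derive. repeat split; auto; eexists; apply I_derive.
Qed.

Lemma cont_pt_R f x : ex_derive f x -> continuity_pt f x.
Proof. intros H. apply continuity_pt_filterlim. apply cont_of_ex_derive. auto. Qed.

Lemma two_lt_c : c < 2.9.
Proof.
  assert (H := c_pos). assert (c * c = 2 * PI) by (unfold c; apply sqrt_sqrt; generalize PI_RGT_0; lra).
  generalize PI_4. nra.
Qed.

Lemma I2_lb : 1 < I 2.
Proof.
  assert (H := LI_bounds 1 2). simpl in H. 
  assert (LI 2 3 <= I 2) by (apply H; lra).
  unfold LI in H0. simpl in H0. lra.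
Qed.

Lemma I_neg x : x <= 0 -> I x <= 0.
Proof. intros. rewrite <- I0. apply I_le; auto. Qed.

Lemma tau_exists w : 0 < w -> exists t, 0 < t /\ Pf w t = K.
Proof.
  intros Hw.
  set (T := 2 * w + 2).
  assert (HT : K < Pf w T).
  { unfold Pf, K.
    assert (I 2 <= I ((0 + T) / w)) by (apply I_le; unfold T; apply (Rmult_le_reg_r w); auto; field_simplify; lra).
    assert (I 2 <= I ((1 + T) / w)) by (apply I_le; unfold T; apply (Rmult_le_reg_r w); auto; field_simplify; lra).
    assert (I ((0 - T) / w) <= 0) by (apply I_neg; unfold T; apply (Rmult_le_reg_r w); auto; field_simplify; lra).
    assert (I ((1 - T) / w) <= 0) by (apply I_neg; unfold T; apply (Rmult_le_reg_r w); auto; field_simplify; lra).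
    generalize I2_lb two_lt_c c_pos. unfold alpha. intros. lra. }
  destruct (IVT (fun t => Pf w t - K) 0 T) as [z [Hz E]].
  - intros x. apply continuity_pt_minus. apply cont_pt_R, Pf_ex_derive_t. apply continuity_pt_const. intros a b; auto.
  - unfold T; lra.
  - rewrite Pf_0. unfold K, alpha. generalize c_pos. lra.
  - lra.
  - exists z. split.
    + destruct Hz as [[Hz|Hz] _]; auto. subst z. rewrite Pf_0 in E. unfold K, alpha in E. generalize c_pos. lra.
    + lra.
Qed.

Definition tau (w : R) : R := epsilon (inhabits 0) (fun t => 0 < t /\ Pf w t = K).

Lemma tau_spec w : 0 < w -> 0 < tau w /\ Pf w (tau w) = K.
Proof. intros Hw. unfold tau. apply epsilon_spec. apply tau_exists; auto. Qed.


Lemma tau_bracket w t1 t2 : 0 < w -> Pf w t1 < K -> K < Pf w t2 -> t1 < tau w < t2.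
Proof.
  intros Hw H1 H2. destruct (tau_spec w Hw) as [_ E]. split.
  - destruct (Rlt_le_dec t1 (tau w)) as [h|h]; auto.
    destruct h as [h|h]. apply (Pf_lt w) in h; auto; lra. subst; lra.
  - destruct (Rlt_le_dec (tau w) t2) as [h|h]; auto.
    destruct h as [h|h]. apply (Pf_lt w) in h; auto; lra. subst; lra.
Qed.

Lemma tau_cont w0 : 0 < w0 -> continuity_pt tau w0.
Proof.
  intros Hw0 eps Heps.
  destruct (tau_spec w0 Hw0) as [_ E0].
  set (t1 := tau w0 - eps / 2). set (t2 := tau w0 + eps / 2).
  assert (P1 : Pf w0 t1 < K) by (rewrite <- E0; apply Pf_lt; unfold t1; lra).
  assert (P2 : K < Pf w0 t2) by (rewrite <- E0; apply Pf_lt; unfold t2; lra).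
  assert (C1 := cont_pt_R _ w0 (Pf_ex_derive_w w0 t1 ltac:(lra))).
  assert (C2 := cont_pt_R _ w0 (Pf_ex_derive_w w0 t2 ltac:(lra))).
  destruct (C1 (K - Pf w0 t1) ltac:(lra)) as [d1 [Hd1 D1]].
  destruct (C2 (Pf w0 t2 - K) ltac:(lra)) as [d2 [Hd2 D2]].
  exists (Rmin (Rmin d1 d2) (w0 / 2)). split.
  - apply Rmin_pos; [apply Rmin_pos|]; lra.
  - intros w [_ Hw]. unfold R_dist in *.
    assert (Hm1 := Rmin_l (Rmin d1 d2) (w0 / 2)). assert (Hm2 := Rmin_r (Rmin d1 d2) (w0 / 2)).
    assert (Hm3 := Rmin_l d1 d2). assert (Hm4 := Rmin_r d1 d2).
    assert (Hwp : 0 < w) by (apply Rabs_def2 in Hw; lra).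
    destruct (Req_dec w w0) as [Heq|Hne].
    { subst w. unfold dist; simpl. unfold R_dist. rewrite Rminus_eq_0, Rabs_R0. lra. }
    assert (A1 : Rabs (Pf w t1 - Pf w0 t1) < K - Pf w0 t1).
    { apply (D1 w). split. split. exact Logic.I. auto. unfold R_dist; lra. }
    assert (A2 : Rabs (Pf w t2 - Pf w0 t2) < Pf w0 t2 - K).
    { apply (D2 w). split. split. exact Logic.I. auto. unfold R_dist; lra. }
    apply Rabs_def2 in A1. apply Rabs_def2 in A2.
    assert (B := tau_bracket w t1 t2 Hwp ltac:(lra) ltac:(lra)).
    apply Rabs_def1; unfold t1, t2 in B; lra.
Qed.

Lemma cpt_plus (f g : R -> R) x : continuity_pt f x -> continuity_pt g x -> continuity_pt (fun y => f y + g y) x.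
Proof. apply continuity_pt_plus. Qed.
Lemma cpt_minus (f g : R -> R) x : continuity_pt f x -> continuity_pt g x -> continuity_pt (fun y => f y - g y) x.
Proof. apply continuity_pt_minus. Qed.
Lemma cpt_mult (f g : R -> R) x : continuity_pt f x -> continuity_pt g x -> continuity_pt (fun y => f y * g y) x.
Proof. apply continuity_pt_mult. Qed.
Lemma cpt_div (f g : R -> R) x : continuity_pt f x -> continuity_pt g x -> g x <> 0 -> continuity_pt (fun y => f y / g y) x.
Proof. apply continuity_pt_div. Qed.
Lemma cpt_const (k : R) x : continuity_pt (fun _ => k) x.
Proof. apply continuity_pt_const. intros a b; auto. Qed.
Lemma cpt_id x : continuity_pt (fun y => y) x.
Proof. apply continuity_pt_id. Qed.
Lemma cpt_compD (F f : R -> R) x : (forall y, ex_derive F y) -> continuity_pt f x -> continuity_pt (fun y => F (f y)) x.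
Proof. intros HF Hf. apply (continuity_pt_comp f F x Hf). apply cont_pt_R. auto. Qed.

Lemma I_exd y : ex_derive I y.
Proof. eexists; apply I_derive. Qed.
Lemma J_exd y : ex_derive J y.
Proof. eexists; apply J_derive. Qed.
Lemma gauss_exd y : ex_derive gauss y.
Proof. eexists; apply gauss_derive. Qed.

Definition h (w : R) : R := w * Df w (tau w) - Nf w (tau w).

Lemma h_cont w : 0 < w -> continuity_pt h w.
Proof.
  intros Hw.
  assert (Ct := tau_cont w Hw).
  assert (Cp : forall k, continuity_pt (fun y => (k + tau y) / y) w).
  { intros k. apply cpt_div; [| apply cpt_id | lra]. apply cpt_plus. apply cpt_const. auto. }
  assert (Cm : forall k, continuity_pt (fun y => (k - tau y) / y) w).
  { intros k. apply cpt_div; [| apply cpt_id | lra]. apply cpt_minus. apply cpt_const. auto. }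
  unfold h, Df, Nf.
  apply cpt_minus; [apply cpt_mult; [apply cpt_id|] |].
  - apply cpt_plus; apply cpt_mult; try apply cpt_const; apply cpt_minus;
      apply cpt_compD; auto using J_exd.
  - apply cpt_mult; try apply cpt_const; apply cpt_minus;
      apply cpt_compD; auto using gauss_exd.
Qed.

Lemma Df_pos w t : 0 < w -> 0 < t -> 0 < Df w t.
Proof.
  intros Hw Ht. unfold Df.
  replace ((0 - t) / w) with (- ((0 + t) / w)) by (field; lra).
  rewrite J_odd.
  assert (0 < J ((0 + t) / w)) by (apply J_pos; unfold Rdiv; apply Rmult_lt_0_compat; [lra| apply Rinv_0_lt_compat; lra]).
  assert (J ((1 - t) / w) <= J ((1 + t) / w)) by (apply J_le, div_le; lra).
  unfold alpha; lra.
Qed.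

Ltac numtac := unfold LI, SE; simpl sum_f_R0; simpl dk; simpl INR; simpl Nat.mul; lra.
Lemma Ghi_19_300 : gauss (19/300) <= (997997/1000000).
Proof. rewrite gauss_SE. apply Rle_trans with (SE ((19/300)^2/2) (2*7)); [apply SE_bounds; nra | numtac]. Qed.
Lemma Ghi_13_50 : gauss (13/50) <= (193353/200000).
Proof. rewrite gauss_SE. apply Rle_trans with (SE ((13/50)^2/2) (2*7)); [apply SE_bounds; nra | numtac]. Qed.
Lemma Ghi_89_150 : gauss (89/150) <= (4193/5000).
Proof. rewrite gauss_SE. apply Rle_trans with (SE ((89/150)^2/2) (2*7)); [apply SE_bounds; nra | numtac]. Qed.
Lemma Ghi_121_100 : gauss (121/100) <= (480923/1000000).
Proof. rewrite gauss_SE. apply Rle_trans with (SE ((121/100)^2/2) (2*7)); [apply SE_bounds; nra | numtac]. Qed.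
Lemma Ghi_277_100 : gauss (277/100) <= (5481/250000).
Proof. rewrite gauss_SE. apply Rle_trans with (SE ((277/100)^2/2) (2*7)); [apply SE_bounds; nra | numtac]. Qed.
Lemma Glo_11_150 : (498657/500000) <= gauss (11/150).
Proof. rewrite gauss_SE. apply Rle_trans with (SE ((11/150)^2/2) (2*7+1)); [numtac | apply SE_bounds; nra]. Qed.
Lemma Glo_181_300 : (208399/250000) <= gauss (181/300).
Proof. rewrite gauss_SE. apply Rle_trans with (SE ((181/300)^2/2) (2*7+1)); [numtac | apply SE_bounds; nra]. Qed.
Lemma Glo_79_100 : (91493/125000) <= gauss (79/100).
Proof. rewrite gauss_SE. apply Rle_trans with (SE ((79/100)^2/2) (2*7+1)); [numtac | apply SE_bounds; nra]. Qed.
Lemma Glo_123_100 : (469329/1000000) <= gauss (123/100).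
Proof. rewrite gauss_SE. apply Rle_trans with (SE ((123/100)^2/2) (2*7+1)); [numtac | apply SE_bounds; nra]. Qed.
Lemma Glo_279_100 : (4059/200000) <= gauss (279/100).
Proof. rewrite gauss_SE. apply Rle_trans with (SE ((279/100)^2/2) (2*7+1)); [numtac | apply SE_bounds; nra]. Qed.
Lemma Ihi_19_300 : I (19/300) <= (15823/250000).
Proof. apply Rle_trans with (LI (19/300) (2*7)); [apply LI_bounds; lra | numtac]. Qed.
Lemma Ihi_11_150 : I (11/150) <= (18317/250000).
Proof. apply Rle_trans with (LI (11/150) (2*7)); [apply LI_bounds; lra | numtac]. Qed.
Lemma Ihi_13_50 : I (13/50) <= (257101/1000000).
Proof. apply Rle_trans with (LI (13/50) (2*7)); [apply LI_bounds; lra | numtac]. Qed.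
Lemma Ihi_89_150 : I (89/150) <= (140071/250000).
Proof. apply Rle_trans with (LI (89/150) (2*7)); [apply LI_bounds; lra | numtac]. Qed.
Lemma Ihi_77_100 : I (77/100) <= (700227/1000000).
Proof. apply Rle_trans with (LI (77/100) (2*7)); [apply LI_bounds; lra | numtac]. Qed.
Lemma Ihi_79_100 : I (79/100) <= (714981/1000000).
Proof. apply Rle_trans with (LI (79/100) (2*7)); [apply LI_bounds; lra | numtac]. Qed.
Lemma Ihi_121_100 : I (121/100) <= (242429/250000).
Proof. apply Rle_trans with (LI (121/100) (2*7)); [apply LI_bounds; lra | numtac]. Qed.
Lemma Ihi_277_100 : I (277/100) <= (1246321/1000000).
Proof. apply Rle_trans with (LI (277/100) (2*7)); [apply LI_bounds; lra | numtac]. Qed.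
Lemma Ihi_279_100 : I (279/100) <= (311687/250000).
Proof. apply Rle_trans with (LI (279/100) (2*7)); [apply LI_bounds; lra | numtac]. Qed.
Lemma Ilo_11_150 : (73267/1000000) <= I (11/150).
Proof. apply Rle_trans with (LI (11/150) (2*7+1)); [numtac | apply LI_bounds; lra]. Qed.
Lemma Ilo_13_50 : (2571/10000) <= I (13/50).
Proof. apply Rle_trans with (LI (13/50) (2*7+1)); [numtac | apply LI_bounds; lra]. Qed.
Lemma Ilo_27_100 : (53351/200000) <= I (27/100).
Proof. apply Rle_trans with (LI (27/100) (2*7+1)); [numtac | apply LI_bounds; lra]. Qed.
Lemma Ilo_89_150 : (560283/1000000) <= I (89/150).
Proof. apply Rle_trans with (LI (89/150) (2*7+1)); [numtac | apply LI_bounds; lra]. Qed.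
Lemma Ilo_181_300 : (142161/250000) <= I (181/300).
Proof. apply Rle_trans with (LI (181/300) (2*7+1)); [numtac | apply LI_bounds; lra]. Qed.
Lemma Ilo_79_100 : (35749/50000) <= I (79/100).
Proof. apply Rle_trans with (LI (79/100) (2*7+1)); [numtac | apply LI_bounds; lra]. Qed.
Lemma Ilo_121_100 : (193943/200000) <= I (121/100).
Proof. apply Rle_trans with (LI (121/100) (2*7+1)); [numtac | apply LI_bounds; lra]. Qed.
Lemma Ilo_123_100 : (979217/1000000) <= I (123/100).
Proof. apply Rle_trans with (LI (123/100) (2*7+1)); [numtac | apply LI_bounds; lra]. Qed.
Lemma Ilo_279_100 : (623349/500000) <= I (279/100).
Proof. apply Rle_trans with (LI (279/100) (2*7+1)); [numtac | apply LI_bounds; lra]. Qed.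

Lemma PI_bounds : 314155/100000 < PI < 314165/100000.
Proof.
  assert (H := PI_2_3_7_ineq 3).
  unfold tg_alt, PI_2_3_7_tg, Ratan_seq in H. simpl in H. lra.
Qed.

Lemma c_bounds : 25066/10000 < c < 25067/10000.
Proof.
  assert (H := c_pos). assert (c * c = 2 * PI) by (unfold c; apply sqrt_sqrt; generalize PI_RGT_0; lra).
  generalize PI_bounds. intros. split; nra.
Qed.

Lemma Pf_a1 : Pf (1/2) (385/1000) < K.
Proof.
  unfold Pf, K, alpha.
  replace ((0 + 385/1000)/(1/2)) with (77/100) by field.
  replace ((0 - 385/1000)/(1/2)) with (-(77/100)) by field.
  replace ((1 + 385/1000)/(1/2)) with (277/100) by field.
  replace ((1 - 385/1000)/(1/2)) with (123/100) by field.
  rewrite I_odd. generalize Ihi_77_100 Ihi_277_100 Ilo_123_100 c_bounds. lra.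
Qed.

Lemma Pf_a2 : K < Pf (1/2) (395/1000).
Proof.
  unfold Pf, K, alpha.
  replace ((0 + 395/1000)/(1/2)) with (79/100) by field.
  replace ((0 - 395/1000)/(1/2)) with (-(79/100)) by field.
  replace ((1 + 395/1000)/(1/2)) with (279/100) by field.
  replace ((1 - 395/1000)/(1/2)) with (121/100) by field.
  rewrite I_odd. generalize Ilo_79_100 Ilo_279_100 Ihi_121_100 c_bounds. lra.
Qed.

Lemma Pf_b1 : Pf 3 (78/100) < K.
Proof.
  unfold Pf, K, alpha.
  replace ((0 + 78/100)/3) with (13/50) by field.
  replace ((0 - 78/100)/3) with (-(13/50)) by field.
  replace ((1 + 78/100)/3) with (89/150) by field.
  replace ((1 - 78/100)/3) with (11/150) by field.
  rewrite I_odd. generalize Ihi_13_50 Ihi_89_150 Ilo_11_150 c_bounds. lra.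
Qed.

Lemma Pf_b2 : K < Pf 3 (81/100).
Proof.
  unfold Pf, K, alpha.
  replace ((0 + 81/100)/3) with (27/100) by field.
  replace ((0 - 81/100)/3) with (-(27/100)) by field.
  replace ((1 + 81/100)/3) with (181/300) by field.
  replace ((1 - 81/100)/3) with (19/300) by field.
  rewrite I_odd. generalize Ilo_27_100 Ilo_181_300 Ihi_19_300 c_bounds. lra.
Qed.

Lemma h_left : h (1/2) < 0.
Proof.
  assert (B := tau_bracket (1/2) _ _ ltac:(lra) Pf_a1 Pf_a2).
  unfold h, Df, Nf, alpha. set (t := tau (1/2)) in *.
  replace ((0 + t)/(1/2)) with (2 * t) by field.
  replace ((0 - t)/(1/2)) with (- (2 * t)) by field.
  replace ((1 + t)/(1/2)) with (2 + 2 * t) by field.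
  replace ((1 - t)/(1/2)) with (2 - 2 * t) by field.
  rewrite J_odd.
  assert (J (2 * t) <= J (79/100)) by (apply J_le; lra).
  assert (J (2 + 2 * t) <= J (279/100)) by (apply J_le; lra).
  assert (J (121/100) <= J (2 - 2 * t)) by (apply J_le; lra).
  assert (gauss (123/100) <= gauss (2 - 2 * t)) by (apply gauss_dec; lra).
  assert (gauss (2 + 2 * t) <= gauss (277/100)) by (apply gauss_dec; lra).
  unfold J in *.
  generalize Ihi_79_100 Glo_79_100 Ihi_279_100 Glo_279_100 Ilo_121_100 Ghi_121_100 Glo_123_100 Ghi_277_100.
  intros. lra.
Qed.

Lemma h_right : 0 < h 3.
Proof.
  assert (B := tau_bracket 3 _ _ ltac:(lra) Pf_b1 Pf_b2).
  unfold h, Df, Nf, alpha. set (t := tau 3) in *.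
  replace ((0 + t)/3) with (t / 3) by field.
  replace ((0 - t)/3) with (- (t / 3)) by field.
  rewrite J_odd.
  assert (J (13/50) <= J (t / 3)) by (apply J_le; lra).
  assert (J (89/150) <= J ((1 + t) / 3)) by (apply J_le; lra).
  assert (J ((1 - t) / 3) <= J (11/150)) by (apply J_le; lra).
  assert (gauss ((1 - t) / 3) <= gauss (19/300)) by (apply gauss_dec; lra).
  assert (gauss (181/300) <= gauss ((1 + t) / 3)) by (apply gauss_dec; lra).
  unfold J in *.
  generalize Ilo_13_50 Ghi_13_50 Ilo_89_150 Ghi_89_150 Ihi_11_150 Glo_11_150 Ghi_19_300 Glo_181_300.
  intros. lra.
Qed.

Theorem mainTheorem12 :
  exists w : R, 1 / 2 < w /\
    exists tau : R, 0 < tau /\ probA w tau = 1 - alpha /\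
      (forall tau' : R, 0 < tau' -> probA w tau' = 1 - alpha -> tau' = tau) /\
      Fupd w tau = w.
Proof.
  destruct (IVT_interv h (1/2) 3) as [z [Hz E]].
  - intros a Ha. apply h_cont. lra.
  - lra.
  - apply h_left.
  - apply h_right.
  - assert (Hz' : 1 / 2 < z).
    { destruct Hz as [[H|H] _]; auto. subst z. generalize h_left. lra. }
    assert (Hzp : 0 < z) by lra.
    destruct (tau_spec z Hzp) as [Ht EP].
    assert (cne : c <> 0) by (apply Rgt_not_eq, c_pos).
    exists z. split; auto. exists (tau z). split; [|split; [|split]]; auto.
    + rewrite probA_eq, EP. unfold K. field. auto.
    + intros t' Ht' Pt'. rewrite probA_eq in Pt'. apply (Pf_inj z); auto.
      rewrite EP. unfold K. rewrite <- Pt'. field. auto.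
    + assert (D := Df_pos z (tau z) Hzp Ht).
      rewrite Fupd_eq by lra. unfold h in E.
      apply (Rmult_eq_reg_r (Df z (tau z))); [|lra]. field_simplify; lra.
Qed.
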